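(* Let $T$ be a complete theory with monster model $\mathcal{U}$, $A\subseteq\mathcal{U}$ small, $\mu\in\mathfrak{M}_x(\mathcal{U})$, $\nu\in\mathfrak{M}_y(\mathcal{U})$, and suppose $\lambda\in\mathfrak{M}_{xy}(A)$ witnesses $\mu\geq_{\mathbb{E},A}\nu$. Then for every $\psi(y)\in\mathcal{L}_y(\mathcal{U})$ and $\epsilon>0$ there exist $\chi^-_\epsilon(x,y),\chi^+_\epsilon(x,y)\in\mathbb{B}_{xy}(A)$ such that (1) $\chi^-_\epsilon(x,y)\subseteq(\psi(y)\wedge x=x)\subseteq\chi^+_\epsilon(x,y)$; (2) for every $\omega\in\operatorname{E}(\lambda,\mu)$, $\omega(\chi^+_\epsilon(x,y))-\omega(\chi^-_\epsilon(x,y))<\epsilon$; (3) for every $\omega\in\operatorname{E}(\lambda,\mu)$, $|\omega(\chi^{\dagger}_\epsilon(x,y))-\nu(\psi(y))|<\epsilon$ for $\dagger\in\{+,-\}$.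
   Context: For $B\subseteq\mathcal{U}$, $\mathcal{L}_x(B)$ is the Boolean algebra of formulas in $x$ with parameters from $B$ modulo $T$, identified with $B$-definable sets, and embedded in $\mathcal{L}_{xy}(B)$ via $\varphi(x)\mapsto\varphi(x)\wedge y=y$; $\mathfrak{M}_x(B)$ is the set of finitely additive probability measures on $\mathcal{L}_x(B)$. For $\omega\in\mathfrak{M}_{xy}(B)$, $\pi_x(\omega)(\varphi(x))=\omega(\varphi(x)\wedge y=y)$ (similarly $\pi_y$); $\omega|_C$ is restriction. $\operatorname{E}(\lambda,\mu)=\{\omega\in\mathfrak{M}_{xy}(\mathcal{U}):\omega|_A=\lambda,\pi_x(\omega)=\mu\}$. $\lambda$ witnesses $\mu\geq_{\mathbb{E},A}\nu$ means $\pi_x(\lambda)=\mu|_A$ and $\pi_y(\omega)=\nu$ for all $\omega\in\operatorname{E}(\lambda,\mu)$. $\mathbb{B}_{xy}(A)$ is the Boolean subalgebra of $\mathcal{L}_{xy}(\mathcal{U})$ generated by $\{\varphi(x)\wedge y=y:\varphi(x)\in\mathcal{L}_x(\mathcal{U})\}\cup\mathcal{L}_{xy}(A)$. *)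

(* Defs.v *)
From Stdlib Require Lists.List.
From mathcomp Require Import all_boot all_order all_algebra.
From mathcomp Require Import boolp classical_sets cardinality reals.

Import Order.TTheory GRing.Theory Num.Theory.
Local Open Scope classical_set_scope.
Local Open Scope ring_scope.

(** * First-order syntax over a signature (function symbols [F], relation
    symbols [Rl]; a symbol is interpreted on the list of its arguments),
    with parameters (constants) taken from a type [P]. *)
Section Syntax.
Variables (F Rl P : Type).

Inductive term : Type :=
| tvar of nat
| tpar of P
| tapp of F & seq term.

Inductive formula : Type :=
| fatom of Rl & seq term
| feq of term & term
| fneg of formula
| fand of formula & formula
| fex of nat & formula.

Fixpoint term_params_in (B : set P) (t : term) : Prop :=
  match t with
  | tvar _ => True
  | tpar p => B p
  | tapp _ ts => foldr (fun t acc => term_params_in B t /\ acc) True ts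
  end.

Fixpoint params_in (B : set P) (phi : formula) : Prop :=
  match phi with
  | fatom _ ts => foldr (fun t acc => term_params_in B t /\ acc) True ts
  | feq t1 t2 => term_params_in B t1 /\ term_params_in B t2
  | fneg f => params_in B f
  | fand f g => params_in B f /\ params_in B g
  | fex _ f => params_in B f
  end.
End Syntax.

Arguments tvar {F P}. Arguments tpar {F P}. Arguments tapp {F P}.
Arguments fatom {F Rl P}. Arguments feq {F Rl P}. Arguments fneg {F Rl P}.
Arguments fand {F Rl P}. Arguments fex {F Rl P}.

Section Semantics.
Variables (F Rl U : Type) (funI : F -> seq U -> U) (relI : Rl -> seq U -> Prop).

Fixpoint teval (v : nat -> U) (t : term F U) : U :=
  match t with
  | tvar k => v k
  | tpar u => u
  | tapp f ts => funI f (map (teval v) ts)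
  end.

Definition upd (v : nat -> U) (k : nat) (u : U) : nat -> U :=
  fun j => if j == k then u else v j.

Fixpoint sat (v : nat -> U) (phi : formula F Rl U) : Prop :=
  match phi with
  | fatom r ts => relI r (map (teval v) ts)
  | feq t1 t2 => teval v t1 = teval v t2
  | fneg f => ~ sat v f
  | fand f g => sat v f /\ sat v g
  | fex k f => exists u, sat (upd v k u) f
  end.

(** [B]-definable subsets of [U^n] (tuples of variables [x = (x_0,...,x_{n-1})]),
    i.e. the elements of [L_x(B)] (formulas modulo [T = Th(U)], identified with
    the sets they define). *)
Definition definable (n : nat) (B : set U) (S : set ('I_n -> U)) : Prop :=
  exists phi : formula F Rl U, params_in F Rl U B phi /\
    forall a : 'I_n -> U,
      S a <-> (forall v : nat -> U, (forall i : 'I_n, v i = a i) -> sat v phi).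

Definition card_lt_type {T : Type} (B : set T) (K : Type) : Prop :=
  ~ (card_le [set: K] B).

(** [U] is a monster model for the cardinal represented by [K]:
    nonempty, [K]-saturated, strongly [K]-homogeneous, [K] bigger than the
    language and than [aleph_0]. *)
Definition saturated (K : Type) : Prop :=
  forall (B : set U) (p : set (formula F Rl U)),
    card_lt_type B K ->
    (forall phi, p phi -> params_in F Rl U B phi) ->
    (forall s : seq (formula F Rl U), (forall phi, Stdlib.Lists.List.In phi s -> p phi) ->
       exists u : U, forall phi, Stdlib.Lists.List.In phi s ->
         forall v : nat -> U, v 0%N = u -> sat v phi) ->
    exists u : U, forall phi, p phi -> forall v : nat -> U, v 0%N = u -> sat v phi.

Definition automorphism (s : U -> U) : Prop :=
  bijective s /\
  (forall f l, s (funI f l) = funI f (map s l)) /\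
  (forall r l, relI r l <-> relI r (map s l)).

Definition elementary_on (B : set U) (f : U -> U) : Prop :=
  forall (phi : formula F Rl U) (v : nat -> U),
    params_in F Rl U set0 phi -> (forall k, B (v k)) ->
    (sat v phi <-> sat (f \o v) phi).

Definition strongly_homogeneous (K : Type) : Prop :=
  forall (B : set U) (f : U -> U), card_lt_type B K -> elementary_on B f ->
    exists s, automorphism s /\ forall b, B b -> s b = f b.

Definition monster (K : Type) : Prop :=
  inhabited U /\ saturated K /\ strongly_homogeneous K /\
  card_lt_type [set: F + Rl] K /\ card_lt_type [set: nat] K.

(** cylinders: [phi(x) /\ y = y] and [psi(y) /\ x = x] in variables [xy] *)
Definition cylx (n m : nat) (S : set ('I_n -> U)) : set ('I_(n + m) -> U) :=
  fun c => S (fun i => c (lshift m i)).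
Definition cyly (n m : nat) (S : set ('I_m -> U)) : set ('I_(n + m) -> U) :=
  fun c => S (fun j => c (rshift n j)).

Variable R : realType.

(** finitely additive probability measures on [L_x(B)] ([mu] is only
    meaningful on [B]-definable sets). *)
Definition keisler (n : nat) (B : set U) (mu : set ('I_n -> U) -> R) : Prop :=
  mu setT = 1 /\
  (forall D, definable n B D -> 0 <= mu D) /\
  (forall D1 D2, definable n B D1 -> definable n B D2 -> D1 `&` D2 = set0 ->
     mu (D1 `|` D2) = mu D1 + mu D2).

Definition Eset (n m : nat) (A : set U) (lam : set ('I_(n + m) -> U) -> R)
  (mu : set ('I_n -> U) -> R) (om : set ('I_(n + m) -> U) -> R) : Prop :=
  keisler (n + m) setT om /\
  (forall D, definable (n + m) A D -> om D = lam D) /\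
  (forall D, definable n setT D -> om (cylx n m D) = mu D).

Definition witnesses (n m : nat) (A : set U) (lam : set ('I_(n + m) -> U) -> R)
  (mu : set ('I_n -> U) -> R) (nu : set ('I_m -> U) -> R) : Prop :=
  (forall D, definable n A D -> lam (cylx n m D) = mu D) /\
  (forall om, Eset n m A lam mu om ->
     forall D, definable m setT D -> om (cyly n m D) = nu D).

Inductive Bxy (n m : nat) (A : set U) : set ('I_(n + m) -> U) -> Prop :=
| Bxy_cyl D : definable n setT D -> Bxy n m A (cylx n m D)
| Bxy_A D : definable (n + m) A D -> Bxy n m A D
| Bxy_compl D : Bxy n m A D -> Bxy n m A (~` D)
| Bxy_and D1 D2 : Bxy n m A D1 -> Bxy n m A D2 -> Bxy n m A (D1 `&` D2).

End Semantics.

Arguments definable {F Rl U} funI relI n B S.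
Arguments monster {F Rl U} funI relI K.
Arguments keisler {F Rl U} funI relI {R} n B mu.
Arguments Eset {F Rl U} funI relI {R} n m A lam mu om.
Arguments witnesses {F Rl U} funI relI {R} n m A lam mu nu.
Arguments Bxy {F Rl U} funI relI n m A _.
Arguments cyly {U} n m S _.
Arguments cylx {U} n m S _.

(* Main.v *)
Require Import Defs.
From HB Require Import structures.
From mathcomp Require Import all_boot all_order all_algebra.
From mathcomp Require Import boolp classical_sets cardinality reals.
From mathcomp Require Import ring lra finmap.
From mathcomp Require Import topology normedtype set_interval interval_inference.
Import numFieldNormedType.Exports.
Import Order.TTheory GRing.Theory Num.Theory.
Local Open Scope classical_set_scope.
Local Open Scope ring_scope.
Set Implicit Arguments.
Unset Strict Implicit.
Lemma xm (P : Prop) : P \/ ~ P.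
Proof. by case: (pselect P); [left|right]. Qed.

Section Ext.
Variables (T : Type) (R : realType).

Definition alg (P : set (set T)) :=
  [/\ P setT, (forall X, P X -> P (~` X)) & (forall X Y, P X -> P Y -> P (X `&` Y))].

Lemma setU_CIC (X Y : set T) : X `|` Y = ~` (~` X `&` ~` Y).
Proof.
apply: funext => z; apply: propext; rewrite /setU /setI /setC /=.
move: (xm (X z)) (xm (Y z)); tauto.
Qed.

Lemma alg_U P X Y : alg P -> P X -> P Y -> P (X `|` Y).
Proof. by case=> _ hC hI hX hY; rewrite setU_CIC; apply/hC/hI; apply/hC. Qed.

Lemma alg_0 P : alg P -> P set0.
Proof. by case=> hT hC _; rewrite -setCT; apply: hC. Qed.

Definition dom (G : set (set T * R)) X := exists r, G (X, r).

Record good (Aa : set (set T)) (H G : set (set T * R)) : Prop := Good {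
  g_fun : forall X r s, G (X,r) -> G (X,s) -> r = s;
  g_alg : alg (dom G);
  g_sub : dom G `<=` Aa;
  g_H : H `<=` G;
  g_T : G (setT, 1);
  g_ge0 : forall X r, G (X,r) -> 0 <= r;
  g_add : forall X Y r s, G (X,r) -> G (Y,s) -> X `&` Y = set0 -> G (X `|` Y, r + s) }.
Arguments g_fun {Aa H G} _ {X r s}. Arguments g_alg {Aa H G}. Arguments g_sub {Aa H G}.
Arguments g_H {Aa H G}. Arguments g_T {Aa H G}. Arguments g_ge0 {Aa H G} _ {X r}.
Arguments g_add {Aa H G} _ {X Y r s}.

Definition fv (G : set (set T * R)) X := xget 0 [set r | G (X, r)].

Section Good.
Variables (Aa : set (set T)) (H G : set (set T * R)).
Hypothesis gG : good Aa H G.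

Lemma fvP X r : G (X, r) -> fv G X = r.
Proof.
move=> hX; apply: xget_unique => // s hs.
by have := g_fun gG hs hX.
Qed.

Lemma fvD X : dom G X -> G (X, fv G X).
Proof. by case=> r hr; rewrite (fvP hr). Qed.

Lemma dom_alg : alg (dom G). Proof. exact: g_alg gG. Qed.

Lemma G0 : G (set0, 0).
Proof.
have [r hr] := alg_0 dom_alg.
have h2 := g_add gG hr hr (setI0 set0); rewrite setU0 in h2.
have e := g_fun gG hr h2.
have r0 : r = 0 by apply: (addrI r); rewrite addr0 -e.
by rewrite -r0.
Qed.

Lemma dom_diff X Y : dom G X -> dom G Y -> dom G (Y `&` ~` X).
Proof. by case: dom_alg => _ hC hI hX hY; apply: hI => //; apply: hC. Qed.

Lemma fv_add X Y : dom G X -> dom G Y -> X `&` Y = set0 ->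
  fv G (X `|` Y) = fv G X + fv G Y.
Proof.
move=> /fvD hX /fvD hY d.
exact: fvP (g_add gG hX hY d).
Qed.

Lemma fv_ge0 X : dom G X -> 0 <= fv G X.
Proof. by move=> /fvD hX; have := g_ge0 gG hX. Qed.

Lemma fv_mono X Y : dom G X -> dom G Y -> X `<=` Y -> fv G X <= fv G Y.
Proof.
move=> hX hY sXY.
have e : Y = X `|` (Y `&` ~` X).
  apply: funext => z; apply: propext; rewrite /setU /setI /setC /=.
  move: (xm (X z)) (xm (Y z)) (sXY z); tauto.
have d : X `&` (Y `&` ~` X) = set0.
  apply: funext => z; apply: propext; rewrite /setI /setC /set0 /=; tauto.
rewrite e fv_add //; last exact: dom_diff.
by rewrite lerDl fv_ge0 //; apply: dom_diff.
Qed.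

Lemma fvT : fv G setT = 1.
Proof. by apply: fvP; exact: g_T gG. Qed.

Lemma fv_le1 X : dom G X -> fv G X <= 1.
Proof. by move=> hX; rewrite -fvT; apply: fv_mono => //; case: dom_alg. Qed.

Definition IS (Z : set T) := [set r : R | exists2 X, X `<=` Z & G (X, r)].
Definition inner Z := sup (IS Z).

Lemma IS_sup Z : has_sup (IS Z).
Proof.
split; first by exists 0; exists set0 => //; apply: G0.
exists 1 => r [X _ hX]; rewrite -(fvP hX); apply: fv_le1; by exists r.
Qed.

Lemma inner_ub X Z r : X `<=` Z -> G (X, r) -> r <= inner Z.
Proof. by move=> s h; apply: sup_upper_bound (IS_sup Z) _ _; exists X. Qed.

Lemma inner_le Z s : (forall X r, X `<=` Z -> G (X, r) -> r <= s) -> inner Z <= s.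
Proof.
move=> h; apply: ge_sup; first by case: (IS_sup Z).
by move=> r [X hX hG]; apply: h hG.
Qed.

Lemma inner_self Z : dom G Z -> inner Z = fv G Z.
Proof.
move=> hZ; apply/eqP; rewrite eq_le; apply/andP; split.
  apply: inner_le => X r s hX; rewrite -(fvP hX); apply: fv_mono => //; by exists r.
by apply: inner_ub (fvD hZ).
Qed.

Lemma inner_ge0 Z : 0 <= inner Z.
Proof. by apply: (inner_ub _ G0). Qed.

Lemma inner_le_fv Y C : dom G Y -> inner (Y `&` C) <= fv G Y.
Proof.
move=> hY; apply: inner_le => X r s hX; rewrite -(fvP hX); apply: fv_mono => //.
  by exists r.
by move=> z /s [].
Qed.

Lemma inner_add X1 X2 C : dom G X1 -> dom G X2 -> X1 `&` X2 = set0 ->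
  inner ((X1 `|` X2) `&` C) = inner (X1 `&` C) + inner (X2 `&` C).
Proof.
move=> h1 h2 d; apply/eqP; rewrite eq_le; apply/andP; split.
  apply: inner_le => W r sW hW.
  have dW : dom G W by exists r.
  have eW : W = (W `&` X1) `|` (W `&` X2).
    apply: funext => z; apply: propext; rewrite /setU /setI /=.
    move: (sW z); rewrite /setU /setI /=; tauto.
  have dd : (W `&` X1) `&` (W `&` X2) = set0.
    rewrite -subset0 -d => z [[_ ?] [_ ?]]; by split.
  rewrite -(fvP hW) eW fv_add //; first last.
  - by case: dom_alg => _ _ hI; apply: hI.
  - by case: dom_alg => _ _ hI; apply: hI.
  apply: lerD; (apply: inner_ub; last by apply: fvD; case: dom_alg => _ _ hI; apply: hI).
    by move=> z [/sW [_ ?] ?]; split.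
  by move=> z [/sW [_ ?] ?]; split.
rewrite -lerBrDr; apply: inner_le => W1 r1 s1 hW1; rewrite lerBrDr addrC -lerBrDr.
apply: inner_le => W2 r2 s2 hW2; rewrite lerBrDr.
have dd : W2 `&` W1 = set0.
  rewrite -subset0 -d => z [/s2 [? _] /s1 [? _]]; by split.
have hU := g_add gG hW2 hW1 dd; apply: inner_ub hU.
by move=> z [/s2 [? ?]|/s1 [? ?]]; split => //; [right|left].
Qed.

End Good.
End Ext.
Section OneStep.
Variables (T : Type) (R : realType).
Variables (Aa : set (set T)) (H G : set (set T * R)).
Hypothesis gG : good Aa H G.
Hypothesis hAa : alg Aa.
Variable C : set T.
Hypothesis hC : Aa C.

Local Notation m := (fv G).
Local Notation D := (dom G).
Local Notation inn := (inner G).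

Lemma disj_pt (A B : set T) : A `&` B = set0 -> forall z, A z -> B z -> False.
Proof. by move=> d z a b; have : (A `&` B) z by []; rewrite d. Qed.

Lemma dI X Y : D X -> D Y -> D (X `&` Y).
Proof. by case: (dom_alg gG) => _ _ hI; apply: hI. Qed.
Lemma dC X : D X -> D (~` X).
Proof. by case: (dom_alg gG) => _ hC' _; apply: hC'. Qed.
Lemma dU X Y : D X -> D Y -> D (X `|` Y).
Proof. by move=> hX hY; apply: alg_U (dom_alg gG) hX hY. Qed.

Lemma WD1 Y Y'' : D Y -> D Y'' -> Y'' `<=` Y -> Y `&` ~` Y'' `<=` C ->
  m Y - inn (Y `&` C) = m Y'' - inn (Y'' `&` C).
Proof.
move=> hY hY'' s sC; set W := Y `&` ~` Y''.
have dW : D W by apply: dI => //; apply: dC.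
have eY : Y = Y'' `|` W.
  apply: funext => z; apply: propext; rewrite /W /setU /setI /setC /=.
  move: (xm (Y z)) (xm (Y'' z)) (s z); tauto.
have d : Y'' `&` W = set0.
  apply: funext => z; apply: propext; rewrite /W /setI /setC /set0 /=; tauto.
have eW : W `&` C = W.
  apply: funext => z; apply: propext; rewrite /setI /=.
  move: (sC z); rewrite /W; tauto.
rewrite {1 2}eY (fv_add gG) // (inner_add gG) // eW (inner_self gG dW).
ring.
Qed.

Lemma WD2 Y Y' : D Y -> D Y' -> Y `&` ~` C = Y' `&` ~` C ->
  m Y - inn (Y `&` C) = m Y' - inn (Y' `&` C).
Proof.
move=> hY hY' e.
have key : forall A B, D A -> D B -> A `&` ~` C = B `&` ~` C ->
    m A - inn (A `&` C) = m (A `&` B) - inn ((A `&` B) `&` C).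
  move=> A B hA hB eAB; apply: WD1 => //; first exact: dI.
  move=> z [hz nz]; case: (xm (C z)) => // nc; exfalso; apply: nz; split => //.
  have : (A `&` ~` C) z by [].
  by rewrite eAB => -[].
rewrite (key _ _ hY hY' e) (key _ _ hY' hY (esym e)) setIC //.
Qed.

Definition val X Y := inn (X `&` C) + (m Y - inn (Y `&` C)).

Definition G' : set (set T * R) := [set p | exists X Y,
  [/\ D X, D Y, p.1 = (X `&` C) `|` (Y `&` ~` C) & p.2 = val X Y]].

Lemma reprC X Y : ((X `&` C) `|` (Y `&` ~` C)) `&` C = X `&` C.
Proof.
apply: funext => z; apply: propext; rewrite /setI /setU /setC /=.
move: (xm (C z)); tauto.
Qed.
Lemma reprN X Y : ((X `&` C) `|` (Y `&` ~` C)) `&` ~` C = Y `&` ~` C.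
Proof.
apply: funext => z; apply: propext; rewrite /setI /setU /setC /=.
move: (xm (C z)); tauto.
Qed.

Lemma val_eq X Y X' Y' : D Y -> D Y' ->
  (X `&` C) `|` (Y `&` ~` C) = (X' `&` C) `|` (Y' `&` ~` C) ->
  val X Y = val X' Y'.
Proof.
move=> hY hY' e; rewrite /val.
have e1 := reprC X Y; rewrite e reprC in e1.
have e2 := reprN X Y; rewrite e reprN in e2.
by rewrite -e1 (WD2 hY hY' (esym e2)).
Qed.

Lemma G'_fun X r s : G' (X, r) -> G' (X, s) -> r = s.
Proof.
move=> [X1 [Y1 [d1 dY1 /= e1 ->]]] [X2 [Y2 [d2 dY2 /= e2 ->]]].
by apply: val_eq => //; rewrite -e1 -e2.
Qed.

Lemma G_G' : G `<=` G'.
Proof.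
move=> [Z r] hZ; have dZ : D Z by exists r.
exists Z, Z; split => //=.
  apply: funext => z; apply: propext; rewrite /setI /setU /setC /=.
  move: (xm (C z)); tauto.
by rewrite /val addrC subrK (fvP gG hZ).
Qed.

Lemma m0 : m set0 = 0.
Proof. by apply: (fvP gG); apply: G0 gG. Qed.

Lemma G'_C : G' (C, inn C).
Proof.
have d0 : D set0 by exists 0; apply: G0 gG.
exists setT, set0; split => //=; first by case: (dom_alg gG).
  apply: funext => z; apply: propext; rewrite /setI /setU /setC /setT /set0 /=.
  tauto.
by rewrite /val setTI set0I (inner_self gG d0) m0 subrr addr0.
Qed.

Lemma good_G' : good Aa H G'.
Proof.
constructor.
- exact: G'_fun.
- split.
  + by exists 1; apply: G_G'; apply: g_T gG.
  + move=> _ [r [X [Y [hX hY /= -> _]]]].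
    exists (val (~` X) (~` Y)), (~` X), (~` Y); split => //=; try exact: dC.
    apply: funext => z; apply: propext; rewrite /setI /setU /setC /=.
    move: (xm (C z)) (xm (X z)) (xm (Y z)); tauto.
  + move=> _ _ [r1 [X1 [Y1 [hX1 hY1 /= -> _]]]] [r2 [X2 [Y2 [hX2 hY2 /= -> _]]]].
    exists (val (X1 `&` X2) (Y1 `&` Y2)), (X1 `&` X2), (Y1 `&` Y2).
    split => //=; try exact: dI.
    apply: funext => z; apply: propext; rewrite /setI /setU /setC /=.
    move: (xm (C z)) (xm (X1 z)) (xm (Y1 z)) (xm (X2 z)) (xm (Y2 z)); tauto.
- move=> _ [r [X [Y [hX hY /= -> _]]]].
  have sX := g_sub gG hX; have sY := g_sub gG hY.
  case: hAa => _ hC' hI.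
  by apply: alg_U => //; apply: hI => //; apply: hC'.
- by move=> p /(g_H gG) /G_G'.
- by apply: G_G'; apply: g_T gG.
- move=> _ _ [X [Y [hX hY _ /= ->]]]; rewrite /val.
  apply: addr_ge0; first exact: inner_ge0 gG _.
  by rewrite subr_ge0; apply: (inner_le_fv gG).
- move=> Z1 Z2 r1 r2 [X1 [Y1 [hX1 hY1 /= e1 ->]]] [X2 [Y2 [hX2 hY2 /= e2 ->]]] d.
  have dz := disj_pt d.
  set X2' := X2 `&` ~` X1; set Y2' := Y2 `&` ~` Y1.
  have hX2' : D X2' by apply: dI => //; apply: dC.
  have hY2' : D Y2' by apply: dI => //; apply: dC.
  have eZ2 : Z2 = (X2' `&` C) `|` (Y2' `&` ~` C).
    rewrite e2; apply: funext => z; apply: propext.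
    move: (dz z); rewrite e1 e2 /X2' /Y2' /setI /setU /setC /=.
    move: (xm (C z)) (xm (X1 z)) (xm (Y1 z)) (xm (X2 z)) (xm (Y2 z)); tauto.
  have -> : val X2 Y2 = val X2' Y2' by apply: val_eq => //; rewrite -e2.
  exists (X1 `|` X2'), (Y1 `|` Y2'); split => //=; try exact: dU.
    rewrite e1 eZ2; apply: funext => z; apply: propext.
    rewrite /X2' /Y2' /setI /setU /setC /=.
    move: (xm (C z)) (xm (X1 z)) (xm (Y1 z)) (xm (X2 z)) (xm (Y2 z)); tauto.
  have dX : X1 `&` X2' = set0.
    apply: funext => z; apply: propext; rewrite /X2' /setI /setC /set0 /=; tauto.
  have dY : Y1 `&` Y2' = set0.
    apply: funext => z; apply: propext; rewrite /Y2' /setI /setC /set0 /=; tauto.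
  rewrite /val !(inner_add gG) // (fv_add gG) //.
  ring.
Qed.

Lemma onestep : exists G2, [/\ good Aa H G2, G `<=` G2 & G2 (C, inn C)].
Proof. exists G'; split; [exact: good_G' | exact: G_G' | exact: G'_C]. Qed.

End OneStep.
Section ZornExt.
Variables (T : Type) (R : realType).
Variables (Aa : set (set T)) (H : set (set T * R)).
Hypothesis hAa : alg Aa.
Hypothesis gH : good Aa H H.

Let P (G : set (set T * R)) := G = set0 \/ good Aa H G.

Lemma chain2 (F : set (set (set T * R))) : F `<=` P -> total_on F subset ->
  forall G1 G2 p, F G1 -> F G2 -> G1 p ->
  exists G, [/\ F G, good Aa H G, G1 `<=` G & G2 `<=` G].
Proof.
move=> FP tot G1 G2 p f1 f2 g1p.
have ne : forall G, G1 `<=` G -> F G -> good Aa H G.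
  move=> G s fG; case: (FP _ fG) => // e.
  by have := s _ g1p; rewrite e.
case: (tot _ _ f1 f2) => s.
  by exists G2; split => //; apply: ne.
by exists G1; split => //; apply: ne.
Qed.

Lemma zorn_ext : exists G, good Aa H G /\ (forall X, Aa X -> dom G X).
Proof.
have [A [PA maxA]] : exists A, P A /\ forall B, A `<` B -> ~ P B.
  apply: Zorn_bigcup => F FP tot.
  case: (xm (exists G0, F G0 /\ good Aa H G0)) => [[G0 [f0 g0]]|nG]; last first.
    left; apply/seteqP; split => // p [G fG Gp].
    case: (FP _ fG) => e; first by move: Gp; rewrite e.
    by exfalso; apply: nG; exists G.
  right; have c2 := chain2 FP tot.
  constructor.
  - move=> X r s [G1 f1 h1] [G2 f2 h2].
    have [G [fG gG s1 s2]] := c2 _ _ _ f1 f2 h1.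
    by have := g_fun gG (s1 _ h1) (s2 _ h2).
  - split.
    + by exists 1, G0 => //; apply: g_T g0.
    + move=> X [r [G1 f1 h1]].
      have [G [fG gG s1 _]] := c2 _ _ _ f1 f1 h1.
      have dX : dom G X by exists r; apply: s1.
      have [s hs] := (let: And3 _ hC _ := g_alg gG in hC X dX).
      by exists s, G.
    + move=> X Y [r [G1 f1 h1]] [s [G2 f2 h2]].
      have [G [fG gG s1 s2]] := c2 _ _ _ f1 f2 h1.
      have dX : dom G X by exists r; apply: s1.
      have dY : dom G Y by exists s; apply: s2.
      have [t ht] := (let: And3 _ _ hI := g_alg gG in hI X Y dX dY).
      by exists t, G.
  - move=> X [r [G1 f1 h1]].
    have [G [fG gG s1 _]] := c2 _ _ _ f1 f1 h1.
    have dX : dom G X by exists r; apply: s1.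
    exact: (g_sub gG dX).
  - move=> p hp; exists G0 => //. have := g_H g0 hp. done.
  - by exists G0 => //; exact: (g_T g0).
  - move=> X r [G1 f1 h1].
    have [G [fG gG s1 _]] := c2 _ _ _ f1 f1 h1.
    by have := g_ge0 gG (s1 _ h1).
  - move=> X Y r s [G1 f1 h1] [G2 f2 h2] d.
    have [G [fG gG s1 s2]] := c2 _ _ _ f1 f2 h1.
    by exists G => //; exact: (g_add gG (s1 _ h1) (s2 _ h2) d).
have gA : good Aa H A.
  case: PA => // eA; exfalso; apply: (maxA H); last by right.
  rewrite eA; split; first by [].
  by move=> /(_ _ (g_T gH)).
exists A; split => // X hX.
case: (xm (dom A X)) => // nX; exfalso.
have [G2 [g2 s2 c2]] := onestep gA hAa hX.
apply: (maxA G2); last by right.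
split => // s; apply: nX; exists (inner A X); exact: s.
Qed.

End ZornExt.

Section Extension.
Variables (T : Type) (R : realType).

Lemma extension (Aa : set (set T)) (H : set (set T * R)) (C : set T) :
  alg Aa -> good Aa H H -> Aa C ->
  exists w : set T -> R,
    [/\ w setT = 1, (forall X, Aa X -> 0 <= w X),
        (forall X Y, Aa X -> Aa Y -> X `&` Y = set0 -> w (X `|` Y) = w X + w Y),
        (forall X r, H (X, r) -> w X = r) & w C = inner H C].
Proof.
move=> hAa gH hC.
have [G1 [g1 s1 c1]] := onestep gH hAa hC.
have g1' : good Aa G1 G1.
  case: g1 => *; constructor => //.
have [A [gA dA]] := zorn_ext hAa g1'.
exists (fv A); split.
- exact: fvT gA.
- by move=> X /dA hX; have := fv_ge0 gA hX.
- by move=> X Y /dA hX /dA hY d; have := fv_add gA hX hY d.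
- by move=> X r h; have := fvP gA (g_H gA (s1 _ h)).
- by have := fvP gA (g_H gA c1).
Qed.

End Extension.
Section Syn.
Variables (F Rl U : Type) (funI : F -> seq U -> U) (relI : Rl -> seq U -> Prop).
Variable u0 : U.
Local Open Scope nat_scope.

Local Notation term := (term F U).
Local Notation formula := (formula F Rl U).
Local Notation sat := (sat F Rl U funI relI).
Local Notation teval := (teval F U funI).

Unset Implicit Arguments.
Fixpoint term_ind2 (P : term -> Prop) (hv : forall k, P (tvar k))
  (hp : forall p, P (tpar p))
  (ha : forall f ts, foldr (fun t acc => P t /\ acc) True ts -> P (tapp f ts))
  (t : term) : P t :=
  match t with
  | tvar k => hv k
  | tpar p => hp p
  | tapp f ts => ha f ts
      ((fix aux (ts : seq term) : foldr (fun t acc => P t /\ acc) True ts :=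
          match ts return foldr (fun t acc => P t /\ acc) True ts with
          | [::] => I
          | t0 :: ts' => conj (term_ind2 P hv hp ha t0) (aux ts')
          end) ts)
  end.

Set Implicit Arguments.
Fixpoint tvb (t : term) : nat :=
  match t with
  | tvar k => k.+1
  | tpar _ => 0
  | tapp _ ts => foldr (fun t acc => maxn (tvb t) acc) 0 ts
  end.

Lemma teval_ext v w t : (forall k, k < tvb t -> v k = w k) ->
  teval v t = teval w t.
Proof.
elim/term_ind2: t => [k|p|f ts IH] /= h; first by apply: h.
  by [].
congr (funI f _); elim: ts IH h => //= t ts IHts [IHt IH] h.
rewrite (IHt) ?IHts // => k hk; apply: h.
  by rewrite leq_max hk orbT.
by rewrite leq_max hk.
Qed.

Lemma term_params_T (t : term) : term_params_in F U [set: U] t.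
Proof.
elim/term_ind2: t => [k|p|f ts IH] //=.
Qed.

Lemma params_T (phi : formula) : params_in F Rl U [set: U] phi.
Proof.
elim: phi => //=.
- move=> r ts; elim: ts => //= t ts IH; split => //; exact: term_params_T.
- move=> t1 t2; split; exact: term_params_T.
Qed.

Fixpoint fvb (phi : formula) : nat :=
  match phi with
  | fatom _ ts => foldr (fun t acc => maxn (tvb t) acc) 0 ts
  | feq t1 t2 => maxn (tvb t1) (tvb t2)
  | fneg f => fvb f
  | fand f g => maxn (fvb f) (fvb g)
  | fex k f => maxn k.+1 (fvb f)
  end.

Lemma sat_ext phi v w : (forall k, k < fvb phi -> v k = w k) ->
  sat v phi <-> sat w phi.
Proof.
elim: phi v w => /=.
- move=> r ts v w h.
  have -> : map (teval v) ts = map (teval w) ts; last by [].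
  elim: ts h => //= t ts IH h; congr (_ :: _).
    by apply: teval_ext => k hk; apply: h; rewrite leq_max hk.
  by apply: IH => k hk; apply: h; rewrite leq_max hk orbT.
- move=> t1 t2 v w h.
  rewrite (@teval_ext v w t1); last by move=> k hk; apply: h; rewrite leq_max hk.
  by rewrite (@teval_ext v w t2) //; move=> k hk; apply: h; rewrite leq_max hk orbT.
- by move=> f IH v w h; rewrite (IH v w h).
- move=> f IHf g IHg v w h.
  rewrite (IHf v w); last by move=> k hk; apply: h; rewrite leq_max hk.
  by rewrite (IHg v w) //; move=> k hk; apply: h; rewrite leq_max hk orbT.
- move=> k f IH v w h.
  have e : forall u, sat (upd U v k u) f <-> sat (upd U w k u) f.
    move=> u; apply: IH => j hj; rewrite /upd; case: eqP => // _; apply: h.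
    by rewrite leq_max hj orbT.
  by split=> -[u hu]; exists u; [apply/e|apply/e].
Qed.

Lemma sat_ext_imp phi v w : (forall k, k < fvb phi -> v k = w k) ->
  sat v phi -> sat w phi.
Proof. by move=> h; case: (sat_ext h). Qed.

Definition exblock (ks : seq nat) (phi : formula) := foldr (fun k f => fex k f) phi ks.

Lemma sat_exblock ks phi v : sat v (exblock ks phi) <->
  exists w, (forall j, j \notin ks -> w j = v j) /\ sat w phi.
Proof.
elim: ks v => [|k ks IH] v /=.
  split; first by move=> h; exists v.
  move=> [w [hw s]]; have -> : v = w by apply: funext => j; rewrite hw.
  done.
split.
  move=> [u /IH [w [hw s]]]; exists w; split => // j; rewrite in_cons negb_or.
  move=> /andP [jk jks]; rewrite hw // /upd; case: eqP => // e.
  by move: jk; rewrite e eqxx.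
move=> [w [hw s]]; exists (w k); apply/IH; exists w; split => // j jks.
rewrite /upd; case: eqP => [->//|/eqP jk]; apply: hw.
by rewrite in_cons negb_or jk jks.
Qed.

Lemma params_exblock B ks phi :
  params_in F Rl U B (exblock ks phi) <-> params_in F Rl U B phi.
Proof. by elim: ks => //=. Qed.

Definition ext0 n (a : 'I_n -> U) : nat -> U := fun k => odflt u0 (omap a (insub k)).
Arguments ext0 {n}.

Lemma ext0E n (a : 'I_n -> U) (i : 'I_n) : ext0 a i = a i.
Proof. by rewrite /ext0 valK. Qed.

Definition ksOf n (phi : formula) := iota n (maxn n (fvb phi) - n).

Lemma mem_ksOf n phi j : (j \in ksOf n phi) = (n <= j < maxn n (fvb phi)).
Proof. by rewrite /ksOf mem_iota subnKC // leq_maxl. Qed.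

Lemma definable_C n B S : definable funI relI n B S -> definable funI relI n B (~` S).
Proof.
move=> [phi [pB hS]].
exists (exblock (ksOf n phi) (fneg phi)); split; first by apply/params_exblock.
move=> a; split.
  move=> nS v hv; apply/sat_exblock.
  have [v0 [hv0 ns0]] : exists v0 : nat -> U, (forall i : 'I_n, v0 i = a i) /\ ~ sat v0 phi.
    case: (xm (exists v0 : nat -> U, (forall i : 'I_n, v0 i = a i) /\ ~ sat v0 phi)) => // h.
    exfalso; apply: nS; apply/hS => v1 hv1; case: (xm (sat v1 phi)) => // ns.
    by exfalso; apply: h; exists v1.
  exists (fun j => if n <= j < maxn n (fvb phi) then v0 j else v j); split.
    by move=> j; rewrite -mem_ksOf => /negbTE ->.
  move=> s; apply: ns0; apply: (sat_ext_imp _ s) => k hk.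
  case: ifP => // /negbT; rewrite negb_and -ltnNge.
  case/orP => [kn|]; last by rewrite -leqNgt => /(leq_trans (leq_maxr n _)); rewrite leqNgt hk.
  by rewrite (hv (Ordinal kn)) (hv0 (Ordinal kn)).
move=> h hS'; move/hS: hS' => hSa.
have := h (ext0 a) (ext0E a); move/sat_exblock => [w [hw ns]].
apply: ns; apply: hSa => i; rewrite hw ?ext0E //.
by rewrite mem_ksOf negb_and -ltnNge ltn_ord.
Qed.

Lemma definable_I n B S1 S2 : definable funI relI n B S1 -> definable funI relI n B S2 ->
  definable funI relI n B (S1 `&` S2).
Proof.
move=> [phi1 [p1 h1]] [phi2 [p2 h2]]; exists (fand phi1 phi2); split => // a.
split.
  by move=> [/h1 s1 /h2 s2] v hv; split; [apply: s1|apply: s2].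
by move=> h; split; [apply/h1|apply/h2] => v hv; have [] := h v hv.
Qed.

Lemma definable_T n : definable funI relI n [set: U] [set: 'I_n -> U].
Proof. by exists (feq (tvar 0) (tvar 0)); split => //. Qed.

Lemma definable_setT n B S : definable funI relI n B S -> definable funI relI n [set: U] S.
Proof. by move=> [phi [_ h]]; exists phi; split => //; apply: params_T. Qed.

Lemma definable_cylx n m B D : definable funI relI n B D ->
  definable funI relI (n + m) B (cylx n m D).
Proof.
move=> [phi [pB hD]].
exists (fneg (exblock (ksOf n phi) (fneg phi))); split; first by apply/params_exblock.
move=> c; rewrite /cylx; split.
  move=> /hD hDc v hv /sat_exblock [w [hw ns]]; apply: ns; apply: hDc => i.
  rewrite hw; first by rewrite (hv (lshift m i)).
  by rewrite mem_ksOf negb_and -ltnNge ltn_ord.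
move=> h; apply/hD => v' hv'; case: (xm (sat v' phi)) => // ns; exfalso.
apply: (h (ext0 c) (ext0E c)); apply/sat_exblock.
exists (fun j => if n <= j < maxn n (fvb phi) then v' j else ext0 c j); split.
  by move=> j; rewrite -mem_ksOf => /negbTE ->.
move=> s; apply: ns; apply: (sat_ext_imp _ s) => k hk.
case: ifP => // /negbT; rewrite negb_and -ltnNge.
case/orP => [kn|]; last by rewrite -leqNgt => /(leq_trans (leq_maxr n _)); rewrite leqNgt hk.
have -> : k = lshift m (Ordinal kn) by [].
by rewrite ext0E (hv' (Ordinal kn)).
Qed.

End Syn.
Definition FS (T : Type) (R : realType) := prod_topology (fun _ : set T => (R : topologicalType)).
HB.instance Definition _ (T : Type) (R : realType) := Topological.on (FS T R).
HB.instance Definition _ (T : Type) (R : realType) := isPointed.Build (FS T R) (fun _ => 0).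

Section Cpt.
Variables (T : Type) (R : realType).
Local Notation FS := (FS T R).

Lemma cptK : compact [set f : FS | forall i, (`[0,1])%classic (f i)].
Proof. exact (@tychonoff (set T) (fun _ => R) (fun _ => (`[0,1])%classic) (fun _ => @segment_compact R 0 1)). Qed.

Lemma pc (X : set T) : continuous (fun f : FS => f X).
Proof. exact: (@proj_continuous (set T) (fun _ => R) X). Qed.

Lemma pcB (X Y : set T) : continuous (fun f : FS => f Y - f X).
Proof. by move=> f; apply: continuousB; apply: pc. Qed.

Lemma closed_pre (g : FS -> R) (D : set R) : continuous g -> closed D -> closed (g @^-1` D).
Proof.
move=> gc cD; rewrite -openC preimage_setC; apply: open_comp; last by rewrite openC.
by move=> x _; apply: gc.
Qed.

Lemma closure_sub (S D : set FS) : closed D -> S `<=` D -> closure S `<=` D.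
Proof. by move=> cD sSD; apply: subset_trans cD; apply: closureS. Qed.

Lemma seq_unionB (B : set (set T)) (P : set (set T * set T)) (s : seq (set T * set T)) :
  alg B -> (forall p, p \in s -> B p.1) ->
  B [set z | exists2 p, p \in s & p.1 z].
Proof.
move=> hB; elim: s => [|p s IH] h.
  have -> : [set z | exists2 p : set T * set T, p \in [::] & p.1 z] = set0.
    by apply/seteqP; split => z // [].
  exact: alg_0.
have -> : [set z | exists2 q, q \in p :: s & q.1 z] =
    p.1 `|` [set z | exists2 p, p \in s & p.1 z].
  apply/seteqP; split => z.
    by move=> [q]; rewrite in_cons => /orP [/eqP -> ?|qs ?]; [left|right; exists q].
  move=> [h1|[q qs h2]]; first by exists p => //; rewrite mem_head.
  by exists q => //; rewrite in_cons qs orbT.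
apply: alg_U => //; first by apply: h; rewrite mem_head.
by apply: IH => q qs; apply: h; rewrite in_cons qs orbT.
Qed.

Lemma seq_interB (B : set (set T)) (s : seq (set T * set T)) :
  alg B -> (forall p, p \in s -> B p.2) ->
  B [set z | forall p, p \in s -> p.2 z].
Proof.
move=> hB; elim: s => [|p s IH] h.
  have -> : [set z | forall p : set T * set T, p \in [::] -> p.2 z] = setT.
    by apply/seteqP; split => z.
  by case: hB.
have -> : [set z | forall q, q \in p :: s -> q.2 z] =
    p.2 `&` [set z | forall p, p \in s -> p.2 z].
  apply/seteqP; split => z.
    move=> hz; split; first by apply: hz; rewrite mem_head.
    by move=> q qs; apply: hz; rewrite in_cons qs orbT.
  by move=> [h1 h2] q; rewrite in_cons => /orP [/eqP ->|/h2].
case: hB => _ _ hI; apply: hI; first by apply: h; rewrite mem_head.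
by apply: IH => q qs; apply: h; rewrite in_cons qs orbT.
Qed.

Lemma uniform_approx (Dd B : set (set T)) (E : set FS) (C : set T) (eps : R) :
  alg Dd -> alg B -> B `<=` Dd ->
  (forall w, E w -> forall X, Dd X -> 0 <= w X <= 1) ->
  (forall w, E w -> forall X Y, Dd X -> Dd Y -> X `<=` Y -> w X <= w Y) ->
  (forall w w' : FS, E w -> (forall X, Dd X -> w' X = w X) -> E w') ->
  closed E ->
  (forall w, E w -> exists X Y, [/\ B X, B Y, X `<=` C, C `<=` Y & w Y - w X < eps]) ->
  exists Xm Xp, [/\ B Xm, B Xp, Xm `<=` C, C `<=` Xp &
     forall w, E w -> w Xp - w Xm < eps].
Proof.
move=> hDd hB sBD hb hmono hdet cE happ.
pose nw (w : FS) : FS := fun X => if `[< Dd X >] then w X else 0.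
have nwE w X : Dd X -> nw w X = w X by move=> hX; rewrite /nw asboolT.
set E' := [set f : FS | forall i, (`[0,1])%classic (f i)] `&` E.
have cE' : compact E' by apply: compact_closedI => //; exact: cptK.
have nwE' w : E w -> E' (nw w).
  move=> hw; split; last by apply: (hdet w) => // X hX; rewrite nwE.
  move=> i; rewrite /nw; case: asboolP => hi.
    by rewrite /= in_itv /=; apply: hb.
  by rewrite /= in_itv /= lexx ler01.
rewrite compact_cover in cE'.
pose Dc := [set p : set T * set T | [/\ B p.1, B p.2, p.1 `<=` C & C `<=` p.2]].
pose fo (p : set T * set T) := [set w : FS | w p.2 - w p.1 < eps].
have [D' sD' cov] : finite_subset_cover Dc fo E'.
  apply: cE'.
    move=> p _; rewrite /fo.
    have -> : [set w : FS | w p.2 - w p.1 < eps] =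
      (fun w : FS => w p.2 - w p.1) @^-1` [set x | x < eps] by [].
    apply: open_comp; last exact: open_lt.
    by move=> x _; apply: pcB.
  move=> w [_ hw]; have [X [Y [bX bY sX sY lt]]] := happ w hw.
  by exists (X, Y).
have hD' p : p \in D' -> Dc p.
  by move=> /sD' /set_mem.
exists [set z | exists2 p, p \in (D' : seq _) & p.1 z].
exists [set z | forall p, p \in (D' : seq _) -> p.2 z].
split.
- by apply: seq_unionB => // p /hD' [].
- by apply: seq_interB => // p /hD' [].
- by move=> z [p /hD' [_ _ s _]] /s.
- by move=> z hz p /hD' [_ _ _ s]; apply: s.
move=> w hw; have [p Dp fp] := cov _ (nwE' w hw).
have pD : p \in D' by [].
have [b1 b2 s1 s2] := hD' _ pD.
rewrite /fo /= !nwE in fp; try exact: sBD.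
have hXm : Dd [set z | exists2 p, p \in (D' : seq _) & p.1 z].
  by apply: sBD; apply: seq_unionB => // q /hD' [].
have hXp : Dd [set z | forall p, p \in (D' : seq _) -> p.2 z].
  by apply: sBD; apply: seq_interB => // q /hD' [].
apply: le_lt_trans fp; apply: lerB.
  by apply: hmono => //; [exact: sBD| move=> z; apply].
by apply: hmono => //; [exact: sBD| move=> z hz; exists p].
Qed.

End Cpt.
Section Meas.
Variables (T : Type) (R : realType) (Dd : set (set T)) (w : set T -> R).
Hypothesis hDd : alg Dd.
Hypothesis w1 : w setT = 1.
Hypothesis w0 : forall X, Dd X -> 0 <= w X.
Hypothesis wa : forall X Y, Dd X -> Dd Y -> X `&` Y = set0 -> w (X `|` Y) = w X + w Y.

Lemma meas_mono X Y : Dd X -> Dd Y -> X `<=` Y -> w X <= w Y.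
Proof.
move=> hX hY sXY; case: hDd => _ hC hI.
have e : Y = X `|` (Y `&` ~` X).
  apply: funext => z; apply: propext; rewrite /setU /setI /setC /=.
  move: (xm (X z)) (xm (Y z)) (sXY z); tauto.
have d : X `&` (Y `&` ~` X) = set0.
  apply: funext => z; apply: propext; rewrite /setI /setC /set0 /=; tauto.
rewrite e wa //; last by apply: hI => //; apply: hC.
by rewrite lerDl w0 //; apply: hI => //; apply: hC.
Qed.

Lemma meas_compl X : Dd X -> w (~` X) = 1 - w X.
Proof.
move=> hX; case: hDd => _ hC _.
have := wa hX (hC _ hX) (setICr X); rewrite setUCr w1 => ->.
ring.
Qed.

Lemma meas_01 X : Dd X -> 0 <= w X <= 1.
Proof.
move=> hX; rewrite w0 //= -w1; apply: meas_mono => //; by case: hDd.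
Qed.
End Meas.

Inductive gen (T : Type) (Dd : set (set T)) (C : set T) : set T -> Prop :=
| gD X : Dd X -> gen Dd C X
| gC : gen Dd C C
| gN X : gen Dd C X -> gen Dd C (~` X)
| gI X Y : gen Dd C X -> gen Dd C Y -> gen Dd C (X `&` Y).

Lemma gen_alg (T : Type) (Dd : set (set T)) (C : set T) : Dd setT -> alg (gen Dd C).
Proof. by move=> hT; split; [apply: gD | apply: gN | apply: gI]. Qed.

Lemma closure_eq (T : Type) (R : realType) (S : set (FS T R)) (g : FS T R -> R) (c : R) p :
  continuous g -> (forall f, S f -> g f = c) -> closure S p -> g p = c.
Proof.
move=> gc h cl; have := closure_sub (closed_pre gc (@closed_eq R c)) _ cl; apply.
by move=> f /h.
Qed.

Lemma closure_ge (T : Type) (R : realType) (S : set (FS T R)) (g : FS T R -> R) p :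
  continuous g -> (forall f, S f -> 0 <= g f) -> closure S p -> 0 <= g p.
Proof.
move=> gc h cl; have := closure_sub (closed_pre gc (@closed_ge R 0)) _ cl; apply.
by move=> f /h.
Qed.

Lemma pcB3 (T : Type) (R : realType) (X Y Z : set T) :
  continuous (fun f : FS T R => f Z - f X - f Y).
Proof.
move=> f; apply: (@continuousB _ _ _ (fun f : FS T R => f Z - f X) (fun f : FS T R => f Y)).
  exact: pcB.
exact: pc.
Qed.

Unset Implicit Arguments.
Set Strict Implicit.

Theorem theorem3p18 (F Rl U : Type) (funI : F -> seq U -> U)
  (relI : Rl -> seq U -> Prop) (K : Type) (R : realType) (n m : nat)
  (A : set U)
  (mu : set ('I_n -> U) -> R) (nu : set ('I_m -> U) -> R)
  (lam : set ('I_(n + m) -> U) -> R) :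
  monster funI relI K ->
  card_lt_type A K ->
  keisler funI relI n setT mu ->
  keisler funI relI m setT nu ->
  keisler funI relI (n + m) A lam ->
  witnesses funI relI n m A lam mu nu ->
  forall psi : set ('I_m -> U), definable funI relI m setT psi ->
  forall eps : R, 0 < eps ->
  exists chim chip : set ('I_(n + m) -> U),
    Bxy funI relI n m A chim /\ Bxy funI relI n m A chip /\
    (chim `<=` cyly n m psi /\ cyly n m psi `<=` chip) /\
    (forall om, Eset funI relI n m A lam mu om -> om chip - om chim < eps) /\
    (forall om, Eset funI relI n m A lam mu om ->
       `|om chip - nu psi| < eps /\ `|om chim - nu psi| < eps).
Proof.
move=> [[u0] _] _ kmu knu klam [wit1 wit2] psi hpsi eps heps.
pose Dd := definable funI relI (n + m) setT.
pose Bs := Bxy funI relI n m A.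
pose C := cyly n m psi.
pose Ec := Eset funI relI n m A lam mu.
have hDd : alg Dd.
  split; first exact: definable_T.
    by move=> X hX; have := definable_C u0 hX.
  by move=> X Y hX hY; have := definable_I hX hY.
have sBD : Bs `<=` Dd.
  move=> X; elim => [D hD|D hD|D _ IH|D1 D2 _ IH1 _ IH2].
  - by have := definable_cylx u0 m hD.
  - by have := definable_setT hD.
  - by have := definable_C u0 IH.
  - by have := definable_I IH1 IH2.
have hB : alg Bs.
  split.
  - have -> : [set: 'I_(n + m) -> U] = cylx n m [set: 'I_n -> U] by [].
    by apply: Bxy_cyl; apply: definable_T.
  - by move=> X; apply: Bxy_compl.
  - by move=> X Y; apply: Bxy_and.
have hA : alg (gen Dd C) by apply: gen_alg; case: hDd.
have DdA : Dd `<=` gen Dd C by move=> X; apply: gD.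
have EK w : Ec w -> [/\ w setT = 1, (forall X, Dd X -> 0 <= w X) &
    (forall X Y, Dd X -> Dd Y -> X `&` Y = set0 -> w (X `|` Y) = w X + w Y)].
  by move=> [[k1 [k2 k3]] _].
have key w : Ec w -> [/\ (forall X, Bs X -> X `<=` C -> w X <= nu psi),
    (forall Y, Bs Y -> C `<=` Y -> nu psi <= w Y) &
    (forall d, 0 < d -> exists X Y, [/\ Bs X, Bs Y, X `<=` C, C `<=` Y & w Y - w X < d])].
  move=> hw; have [w1 w0 wa] := EK w hw.
  pose H := [set p : set ('I_(n + m) -> U) * R | Bs p.1 /\ p.2 = w p.1].
  have gH : good (gen Dd C) H H.
    constructor.
    - by move=> X r s [_ /= ->] [_ /= ->].
    - have dH X : dom H X <-> Bs X.
        by split; [move=> [r [h _]] | move=> h; exists (w X)].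
      split.
      + by apply/dH; case: hB.
      + by move=> X /dH hX; apply/dH; case: hB => _ hC _; apply: hC.
      + by move=> X Y /dH hX /dH hY; apply/dH; case: hB => _ _ hI; apply: hI.
    - by move=> X [r [h _]]; apply: DdA; apply: sBD.
    - by [].
    - by split => //=; case: hB.
    - by move=> X r [h /= ->]; apply: w0; apply: sBD.
    - move=> X Y r s [hX /= ->] [hY /= ->] d; split => /=; first exact: alg_U.
      by rewrite wa //; apply: sBD.
  have inE w' : [/\ w' setT = 1, (forall X, gen Dd C X -> 0 <= w' X),
        (forall X Y, gen Dd C X -> gen Dd C Y -> X `&` Y = set0 -> w' (X `|` Y) = w' X + w' Y)
        & (forall X r, H (X, r) -> w' X = r)] -> Ec w'.
    move=> [v1 v0 va vH]; split; first split => //.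
      split; first by move=> X hX; apply: v0; apply: DdA.
      by move=> X Y hX hY; apply: va; apply: DdA.
    split.
      move=> D hD; rewrite (vH D (w D)); last by split => //; apply: Bxy_A.
      by case: hw => _ [->].
    move=> D hD; rewrite (vH _ (w (cylx n m D))); last by split => //; apply: Bxy_cyl.
    by case: hw => _ [_ ->].
  have [v1 [e1 e2 e3 e4 e5]] := extension hA gH (gC Dd C).
  have Ev1 : Ec v1 by apply: inE.
  have nu1 : inner H C = nu psi by rewrite -e5; apply: wit2.
  have [v2 [f1 f2 f3 f4 f5]] := extension hA gH (gN (gC Dd C)).
  have Ev2 : Ec v2 by apply: inE.
  have nu2 : inner H (~` C) = 1 - nu psi.
    rewrite -f5 -(wit2 _ Ev2 _ hpsi) -/C -f1 -(setUCr C) f3 ?setICr //.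
      ring.
    exact: gC. exact: gN (gC _ _).
  have K1 X : Bs X -> X `<=` C -> w X <= nu psi.
    move=> hX sX; rewrite -nu1; apply: (inner_ub gH sX); by split.
  have K2 Y : Bs Y -> C `<=` Y -> nu psi <= w Y.
    move=> hY sY.
    have hY' : Bs (~` Y) by case: hB => _ hC _; apply: hC.
    have : w (~` Y) <= 1 - nu psi.
      rewrite -nu2; apply: (inner_ub gH (X := ~` Y)); last by split.
      by move=> z nz cz; apply: nz; apply: sY.
    rewrite (meas_compl hDd w1 wa (sBD _ hY)).
    by rewrite lerD2l lerN2.
  split => // d hd.
  have hd2 : 0 < d / 2 by rewrite divr_gt0.
  have [r1 [X sX [bX /= ->]] lt1] := sup_adherent hd2 (IS_sup gH C).
  have [r2 [X' sX' [bX' /= ->]] lt2] := sup_adherent hd2 (IS_sup gH (~` C)).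
  exists X, (~` X'); split => //.
  - by case: hB => _ hC _; apply: hC.
  - by move=> z cz nz; apply: (sX' z nz).
  rewrite (meas_compl hDd w1 wa (sBD _ bX')).
  rewrite /inner in nu1 nu2; rewrite nu1 in lt1; rewrite nu2 in lt2.
  lra.
have [Xm [Xp [bm bp sm sp unif]]] : exists Xm Xp, [/\ Bs Xm, Bs Xp, Xm `<=` C, C `<=` Xp &
     forall w, Ec w -> w Xp - w Xm < eps].
  apply: (@uniform_approx _ R Dd Bs (Ec : set (FS _ R)) C eps) => //.
  - move=> w hw X hX; have [w1 w0 wa] := EK w hw; exact: (meas_01 hDd w1 w0 wa hX).
  - move=> w hw X Y hX hY sXY; have [w1 w0 wa] := EK w hw; exact: (meas_mono hDd w0 wa hX hY sXY).
  - move=> w w' hw hdet; have [w1 w0 wa] := EK w hw.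
    have hT : Dd setT by case: hDd.
    split; first split; first by rewrite hdet.
      split; first by move=> X hX; rewrite hdet //; apply: w0.
      move=> X Y hX hY d; rewrite !hdet //; [exact: wa | exact: alg_U].
    split.
      move=> D hD; rewrite hdet; first by case: hw => _ [->].
      by have := definable_setT hD.
    move=> D hD; rewrite hdet; first by case: hw => _ [_ ->].
    by have := definable_cylx u0 m hD.
  - move=> p hp; split; first split.
    + apply: (closure_eq (pc (X:=setT)) _ hp) => f hf.
      by have [] := EK f hf.
    + split.
        move=> X hX; apply: (closure_ge (pc (X:=X)) _ hp) => f hf.
        by have [_ h _] := EK f hf; apply: h.
      move=> X Y hX hY d.
      have e : p (X `|` Y) - p X - p Y = 0.
        apply: (closure_eq (@pcB3 _ R X Y (X `|` Y)) _ hp) => f hf.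
        by have [_ _ h] := EK f hf; rewrite h //; ring.
      by apply/eqP; rewrite -subr_eq0 opprD addrA e.
    + split.
        move=> D hD; apply: (closure_eq (pc (X:=D)) _ hp) => f hf.
        by case: hf => _ [h _]; apply: h.
      move=> D hD; apply: (closure_eq (pc (X:=cylx n m D)) _ hp) => f hf.
      by case: hf => _ [_ h]; apply: h.
  - move=> w hw; have [_ _ h] := key w hw; exact: h.
exists Xm, Xp; split => //; split => //; split => //; split => //.
move=> om hom; have [K1 K2 _] := key om hom.
have l1 := K1 _ bm sm; have l2 := K2 _ bp sp; have u := unif _ hom.
split.
  rewrite ger0_norm ?subr_ge0 //.
  by apply: le_lt_trans u; rewrite lerB.
rewrite ler0_norm ?subr_le0 // opprB.
by apply: le_lt_trans u; rewrite lerB.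
Qed.
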